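(* Let $f_0\in\mathbb{C}[z]$ be a polynomial of length $\ell$ with nonzero constant coefficient, let $t$ be an element of the group $G_\ell=\langle n,h,r\rangle$ of permutations of $P_\ell$, and let $a_0=t(f_0)$. Let $f_0,f_1,\ldots$ and $a_0,a_1,\ldots$ be sequences of Rudin–Shapiro-like polynomials generated from $f_0$ and $a_0$, i.e., $f_{m+1}(z)=f_m(z)+\sigma_m z^{\operatorname{len} f_m}f_m^\dagger(-z)$ and $a_{m+1}(z)=a_m(z)+\sigma'_m z^{\operatorname{len} a_m}a_m^\dagger(-z)$ for some sign sequences $(\sigma_m),(\sigma'_m)$ in $\{-1,1\}$. Then $\lim_{m\to\infty}\mathrm{ADF}(a_m)=\lim_{m\to\infty}\mathrm{ADF}(f_m)$.
   Context: For a polynomial $a(z)=a_0+\cdots+a_dz^d$ of degree $d$, $\operatorname{len}a=1+d$ and $a^\dagger(z)=\overline{a_d}+\overline{a_{d-1}}z+\cdots+\overline{a_0}z^d$; $a^\dagger(-z)$ means $a^\dagger$ evaluated at $-z$; $\widetilde{a}(z)=a(-z)$. $P_\ell$ is the set of polynomials of length $\ell$ in $\mathbb{C}[z]$ with nonzero constant coefficient, and $G_\ell$ is the group of permutations of $P_\ell$ generated by $n(f)=-f$, $h(f)=\widetilde{f}$, $r(f)=f^\dagger$. Polynomials are identified with their coefficient sequences; for a sequence $f$, with $C_{f,f}(s)=\sum_jf_{j+s}\overline{f_j}$, the autocorrelation demerit factor is $\mathrm{ADF}(f)=\sum_{s\ne0}|C_{f,f}(s)|^2/|C_{f,f}(0)|^2$,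 which equals $\|f\|_4^4/\|f\|_2^4-1$ with $\|f\|_p=\left(\frac{1}{2\pi}\int_0^{2\pi}|f(e^{i\theta})|^pd\theta\right)^{1/p}$. *)

(* Defs.v *)
From HB Require Import structures.
From mathcomp Require Import all_boot all_order all_algebra.
From mathcomp Require Import complex.
From mathcomp Require Import all_classical all_reals all_analysis.

Set Implicit Arguments.
Unset Strict Implicit.
Unset Printing Implicit Defensive.

Import Order.TTheory GRing.Theory Num.Theory.
Local Open Scope ring_scope.
Local Open Scope complex_scope.

Section RSDefs.
Variable R : realType.
Local Notation C := R[i].

Definition len (a : {poly C}) : nat := size a.

Definition in_P (ell : nat) (a : {poly C}) : Prop := len a = ell /\ a`_0 != 0.

Definition dagger (a : {poly C}) : {poly C} :=
  \poly_(i < size a) (a`_(size a - 1 - i))^*.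

Definition tilde (a : {poly C}) : {poly C} := a \Po (- 'X).

Definition gen_n (f : {poly C}) : {poly C} := - f.
Definition gen_h (f : {poly C}) : {poly C} := tilde f.
Definition gen_r (f : {poly C}) : {poly C} := dagger f.

(* the group G_ell = <n, h, r>: since n, h, r are involutions, the group they
   generate consists of the finite words (compositions) in n, h, r. *)
Inductive in_G : ({poly C} -> {poly C}) -> Prop :=
  | in_G_id : in_G id
  | in_G_n t : in_G t -> in_G (gen_n \o t)
  | in_G_h t : in_G t -> in_G (gen_h \o t)
  | in_G_r t : in_G t -> in_G (gen_r \o t).

Definition rs_step (sigma : C) (f : {poly C}) : {poly C} :=
  f + sigma *: ('X^(len f) * tilde (dagger f)).

Definition RS_like (f : nat -> {poly C}) : Prop :=
  exists sigma : nat -> C,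
    (forall m, sigma m = 1 \/ sigma m = -1) /\
    (forall m, f m.+1 = rs_step (sigma m) (f m)).

Definition coefz (f : {poly C}) (k : int) : C :=
  match k with Posz n => f`_n | Negz _ => 0 end.

Definition acorr (f : {poly C}) (s : int) : C :=
  \sum_(j < size f) coefz f (j%:Z + s) * (f`_j)^*.

Definition sqnorm (z : C) : R := ComplexField.Normc.normc z ^+ 2.

(* ADF(f) = sum_{s <> 0} |C_{f,f}(s)|^2 / |C_{f,f}(0)|^2; C_{f,f}(s) = 0
   unless |s| < size f, so the sum ranges over s = k - (size f - 1),
   k < 2 size f - 1, s <> 0. *)
Definition ADF (f : {poly C}) : R :=
  (\sum_(k < (size f).*2.-1 | (k%:Z - (size f).-1%:Z) != 0)
      sqnorm (acorr f (k%:Z - (size f).-1%:Z))) / sqnorm (acorr f 0).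

End RSDefs.

(* Main.v *)
Require Import Defs.
From HB Require Import structures.
From mathcomp Require Import all_boot all_order all_algebra.
From mathcomp Require Import complex.
From mathcomp Require Import all_classical all_reals all_analysis.
From mathcomp Require Import ring lra zify.
Import Order.TTheory GRing.Theory Num.Theory.
Import numFieldNormedType.Exports.

Set Implicit Arguments.
Unset Strict Implicit.
Unset Printing Implicit Defensive.

Notation "x ^c" := (conjc x).

Section P1.
Local Open Scope ring_scope.
Local Open Scope complex_scope.
Variable R : realType.
Local Notation C := R[i].
Implicit Types p q : {poly C}.

Lemma sqnormE (z : C) : sqnorm z = (complex.Re z) ^+ 2 + (complex.Im z) ^+ 2.
Proof. by case: z => a b; rewrite /sqnorm /= sqr_sqrtr // addr_ge0 ?sqr_ge0. Qed.

Lemma sqnormC (z : C) : (sqnorm z)%:C = z * z^c.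
Proof. by rewrite sqnormE add_Re2_Im2 sqr_normc. Qed.

Lemma sqnorm_ge0 (z : C) : 0 <= sqnorm z.
Proof. by rewrite sqnormE addr_ge0 ?sqr_ge0. Qed.

Lemma sqnorm_gt0 (z : C) : z != 0 -> 0 < sqnorm z.
Proof.
move=> nz; rewrite lt_def sqnorm_ge0 andbT; apply: contra nz => /eqP h.
have : (sqnorm z)%:C = 0 by rewrite h.
by rewrite sqnormC => /eqP; rewrite mulf_eq0 conjc_eq0 orbb.
Qed.

Lemma sum_widen (V : nmodType) (m n : nat) (F : nat -> V) :
  (m <= n)%N -> (forall i, (m <= i)%N -> F i = 0) ->
  \sum_(i < n) F i = \sum_(i < m) F i.
Proof.
move=> le_mn F0; rewrite (big_ord_widen n F le_mn) [in RHS]big_mkcond /=.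
by apply: eq_bigr => i _; case: ifP => // /negbT; rewrite -leqNgt => /F0.
Qed.

Lemma sum_widen2 (V : nmodType) (m n : nat) (F : nat -> V) :
  (forall i, (m <= i)%N -> F i = 0) ->
  (forall i, (n <= i)%N -> F i = 0) ->
  \sum_(i < n) F i = \sum_(i < m) F i.
Proof.
move=> Fm Fn; case: (leqP m n) => h; first exact: sum_widen.
by symmetry; apply: sum_widen => //; apply: ltnW.
Qed.

Lemma conjcM (x y : C) : (x * y)^c = x^c * y^c.
Proof. exact: rmorphM. Qed.
Lemma conjcD (x y : C) : (x + y)^c = x^c + y^c.
Proof. exact: rmorphD. Qed.
Lemma conjcN (x : C) : (- x)^c = - x^c.
Proof. exact: rmorphN. Qed.
Lemma conjcX (x : C) k : (x ^+ k)^c = x^c ^+ k.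
Proof. exact: rmorphXn. Qed.
Lemma conjc_sum (I : Type) (r : seq I) (P : pred I) (F : I -> C) :
  (\sum_(i <- r | P i) F i)^c = \sum_(i <- r | P i) (F i)^c.
Proof. exact: (rmorph_sum conjc). Qed.
Lemma conj_sign k : ((-1) ^+ k : C)^c = (-1) ^+ k.
Proof. by rewrite conjcX (rmorphN1 conjc). Qed.

Lemma tildeD p q : tilde (p + q) = tilde p + tilde q.
Proof. exact: comp_polyD. Qed.
Lemma tildeN p : tilde (- p) = - tilde p.
Proof. by rewrite /tilde -[- p]sub0r comp_polyB comp_poly0 sub0r. Qed.
Lemma tildeM p q : tilde (p * q) = tilde p * tilde q.
Proof. exact: comp_polyM. Qed.
Lemma tildeZ c p : tilde (c *: p) = c *: tilde p.
Proof. exact: comp_polyZ. Qed.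
Lemma tildeXn k : tilde ('X^k : {poly C}) = (-1) ^+ k *: 'X^k.
Proof. by rewrite /tilde comp_Xn_poly -scaleN1r exprZn. Qed.

Lemma coef_tilde p k : (tilde p)`_k = (-1) ^+ k * p`_k.
Proof.
elim/poly_ind: p k => [|p c IH] k; first by rewrite /tilde comp_poly0 !coef0 mulr0.
rewrite /tilde comp_poly_MXaddC -/(tilde p) mulrN !coefD !coefC coefN coefMX.
rewrite coefMX; case: k => [|k] /=; first by rewrite oppr0 expr0 mul1r add0r.
by rewrite IH exprS !addr0 mulN1r mulNr.
Qed.

Lemma size_tilde p : size (tilde p) = size p.
Proof. by rewrite /tilde size_comp_poly2 // size_opp size_polyX. Qed.

Lemma tildeK p : tilde (tilde p) = p.
Proof.
apply/polyP => k; rewrite !coef_tilde mulrA -exprMn mulrNN mulr1 expr1n mul1r //.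
Qed.

Definition dag (n : nat) p : {poly C} := \poly_(i < n.+1) (p`_(n - i))^c.

Lemma coef_dag n p i : (dag n p)`_i = if (i <= n)%N then (p`_(n - i))^c else 0.
Proof. by rewrite coef_poly ltnS. Qed.

Lemma size_dag n p : (size (dag n p) <= n.+1)%N.
Proof. exact: size_poly. Qed.

Lemma daggerE p : p != 0 -> dagger p = dag (size p).-1 p.
Proof.
move=> p0; rewrite /dagger /dag prednK ?size_poly_gt0 //.
by apply/polyP => i; rewrite !coef_poly subn1.
Qed.

Lemma dagK n p : (size p <= n.+1)%N -> dag n (dag n p) = p.
Proof.
move=> sp; apply/polyP => i; rewrite !coef_dag.
case: ifP => hi; first by rewrite leq_subr subKn // conjcK.
apply/esym/eqP; rewrite -/(_ == _) ; apply/eqP/(leq_sizeP _ _ sp).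
by rewrite ltnNge hi.
Qed.

Lemma dagD n p q : dag n (p + q) = dag n p + dag n q.
Proof. by apply/polyP => i; rewrite coefD !coef_dag coefD conjcD; case: ifP; rewrite ?addr0. Qed.

Lemma dagN n p : dag n (- p) = - dag n p.
Proof. by apply/polyP => i; rewrite coefN !coef_dag coefN conjcN; case: ifP; rewrite ?oppr0. Qed.

Lemma dagZ n c p : dag n (c *: p) = c^c *: dag n p.
Proof. by apply/polyP => i; rewrite coefZ !coef_dag coefZ conjcM; case: ifP; rewrite ?mulr0. Qed.


Lemma sign_sub (i n : nat) : (i <= n)%N -> ((-1) ^+ (n - i) : C) = (-1) ^+ n * (-1) ^+ i.
Proof.
move=> hi; rewrite -{2}(subnK hi) exprD -mulrA -exprD addnn -mul2n exprM sqrrN.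
by rewrite !expr1n mulr1.
Qed.

Lemma dag_tilde n p : dag n (tilde p) = (-1) ^+ n *: tilde (dag n p).
Proof.
apply/polyP => i; rewrite coefZ coef_tilde !coef_dag coef_tilde.
case: ifP => hi; last by rewrite !mulr0.
rewrite conjcM conj_sign mulrA; congr (_ * _).
exact: sign_sub.
Qed.

Lemma dag_mulXn n k p : (size p <= n.+1)%N -> dag (n + k) ('X^k * p) = dag n p.
Proof.
move=> sp; apply/polyP => i; rewrite !coef_dag coefXnM.
case: (leqP i n) => hi.
  have h1 : (i <= n + k)%N by lia.
  have h2 : (n + k - i < k)%N = false by apply/negbTE; rewrite -leqNgt; lia.
  have h3 : (n + k - i - k = n - i)%N by lia.
  by rewrite h1 h2 h3.
case: (leqP i (n + k)) => h //.
case: (ltnP (n + k - i) k) => h'; first by rewrite conjc0.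
lia.
Qed.

Lemma dag_shift n k p : (size p <= n.+1)%N -> dag (n + k) p = 'X^k * dag n p.
Proof.
move=> sp; apply/polyP => i; rewrite coefXnM !coef_dag.
case: (ltnP i k) => hik.
  case: (leqP i (n + k)) => hi //; rewrite (leq_sizeP _ _ sp) ?conjc0 //; lia.
have h1 : (i <= n + k)%N = (i - k <= n)%N by apply/idP/idP; lia.
rewrite h1; case: ifP => // _.
have -> : (n + k - i = n - (i - k))%N by lia.
by [].
Qed.

End P1.

Section P2.
Local Open Scope ring_scope.
Local Open Scope complex_scope.
Variable R : realType.
Local Notation C := R[i].
Implicit Types p q r : {poly C}.

Lemma gt_size p i : p`_i != 0 -> (i < size p)%N.
Proof. by apply: contraR; rewrite -leqNgt => /leq_sizeP ->. Qed.

Lemma coef_ge p i : (size p <= i)%N -> p`_i = 0.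
Proof. by move=> h; apply: (leq_sizeP _ _ h). Qed.

Lemma conjc_inv' (x : C) : (x^c)^-1^c = x^-1.
Proof. by rewrite conjc_inv conjcK. Qed.

Lemma horner_dag n p x : x != 0 -> (size p <= n.+1)%N ->
  (dag n p).[x] = x ^+ n * (p.[(x^c)^-1])^c.
Proof.
move=> x0 sp; rewrite /dag horner_poly (horner_coef_wide _ sp) conjc_sum mulr_sumr.
rewrite [RHS](reindex_inj rev_ord_inj) /=; apply: eq_bigr => i _.
rewrite subSS conjcM conjcX conjc_inv' mulrCA; congr (_ * _).
have hi : (i <= n)%N by rewrite -ltnS.
move: (nat_of_ord i) hi => j hj.
rewrite -{1}(subnK hj) exprD exprVn mulrAC mulfV ?mul1r //.
by rewrite expf_neq0.
Qed.

Lemma poly_ext_nz p q : (forall x : C, x != 0 -> p.[x] = q.[x]) -> p = q.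
Proof.
move=> h; apply/eqP; rewrite -subr_eq0; apply/negPn/negP => nz.
set s := [seq (i.+1)%:R : C | i <- iota 0 (size (p - q))].
have hs : size s = size (p - q) by rewrite size_map size_iota.
suff : (size s < size (p - q)%R)%N by rewrite hs ltnn.
apply: max_poly_roots => //.
  apply/allP => x /mapP [i _ ->]; rewrite /root hornerD hornerN h ?subrr //.
rewrite map_inj_uniq ?iota_uniq // => a b /eqP; rewrite eqr_nat eqSS => /eqP.
by [].
Qed.

Lemma size_mul_le m n p q : (size p <= m.+1)%N -> (size q <= n.+1)%N ->
  (size (p * q)%R <= (m + n).+1)%N.
Proof. move=> sp sq; apply: (leq_trans (size_polyMleq p q)); lia. Qed.

Lemma dagM m n p q : (size p <= m.+1)%N -> (size q <= n.+1)%N ->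
  dag (m + n) (p * q) = dag m p * dag n q.
Proof.
move=> sp sq; apply: poly_ext_nz => x x0.
rewrite hornerM !horner_dag ?size_mul_le // hornerM conjcM exprD.
by rewrite mulrACA.
Qed.

Definition pr p q : C := \sum_(i < maxn (size p) (size q)) p`_i * (q`_i)^c.

Lemma prE_l n p q : (size p <= n)%N -> pr p q = \sum_(i < n) p`_i * (q`_i)^c.
Proof.
move=> sp; rewrite /pr; symmetry; apply: (sum_widen2 (F := fun i => p`_i * (q`_i)^c)) => i hi.
  by rewrite coef_ge ?mul0r //; apply: leq_trans hi; rewrite leq_maxl.
by rewrite coef_ge ?mul0r // (leq_trans sp).
Qed.

Lemma prE_r n p q : (size q <= n)%N -> pr p q = \sum_(i < n) p`_i * (q`_i)^c.
Proof.
move=> sq; rewrite /pr; symmetry; apply: (sum_widen2 (F := fun i => p`_i * (q`_i)^c)) => i hi.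
  by rewrite (coef_ge (p := q)) ?conjc0 ?mulr0 //; apply: leq_trans hi; rewrite leq_maxr.
by rewrite (coef_ge (p := q)) ?conjc0 ?mulr0 // (leq_trans sq).
Qed.

Lemma prDl p q r : pr (p + q) r = pr p r + pr q r.
Proof.
rewrite !(prE_r (n := size r)) // -big_split /=; apply: eq_bigr => i _.
by rewrite coefD mulrDl.
Qed.

Lemma prDr p q r : pr p (q + r) = pr p q + pr p r.
Proof.
rewrite !(prE_l (n := size p)) // -big_split /=; apply: eq_bigr => i _.
by rewrite coefD conjcD mulrDr.
Qed.

Lemma prZl c p q : pr (c *: p) q = c * pr p q.
Proof.
rewrite !(prE_r (n := size q)) // mulr_sumr; apply: eq_bigr => i _.
by rewrite coefZ mulrA.
Qed.

Lemma prZr c p q : pr p (c *: q) = c^c * pr p q.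
Proof.
rewrite !(prE_l (n := size p)) // mulr_sumr; apply: eq_bigr => i _.
by rewrite coefZ conjcM mulrCA.
Qed.

Lemma prNl p q : pr (- p) q = - pr p q.
Proof.
rewrite !(prE_r (n := size q)) // -sumrN; apply: eq_bigr => i _.
by rewrite coefN mulNr.
Qed.

Lemma prNr p q : pr p (- q) = - pr p q.
Proof.
rewrite !(prE_l (n := size p)) // -sumrN; apply: eq_bigr => i _.
by rewrite coefN conjcN mulrN.
Qed.

Lemma pr_conj p q : pr q p = (pr p q)^c.
Proof.
rewrite (prE_r (n := size p)) // (prE_l (n := size p)) // conjc_sum; apply: eq_bigr => i _.
by rewrite conjcM conjcK mulrC.
Qed.

Lemma sign_sq k : ((-1) ^+ k : C) * (-1) ^+ k = 1.
Proof. by rewrite -exprD addnn -mul2n exprM sqrrN !expr1n. Qed.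

Lemma pr_tilde p q : pr (tilde p) (tilde q) = pr p q.
Proof.
rewrite !(prE_l (n := size p)) ?size_tilde //; apply: eq_bigr => i _.
by rewrite !coef_tilde conjcM conj_sign mulrACA sign_sq mul1r.
Qed.

Lemma size_mulXn_le k p : (size ('X^k * p)%R <= k + size p)%N.
Proof.
apply/leq_sizeP => j hj; rewrite coefXnM; case: ifP => // _.
by apply/(leq_sizeP _ _ (leqnn _)); lia.
Qed.

Lemma pr_mulXn k p q : pr ('X^k * p) ('X^k * q) = pr p q.
Proof.
rewrite (prE_l (n := k + size p)) ?size_mulXn_le // (prE_l (n := size p)) //.
rewrite big_split_ord /= big1 ?add0r => [|i _]; last first.
  by rewrite coefXnM ltn_ord mul0r.
apply: eq_bigr => i _; rewrite !coefXnM ltnNge leq_addr /= addKn //.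
Qed.

Lemma pr_disj k p q : (size p <= k)%N -> pr p ('X^k * q) = 0.
Proof.
move=> sp; rewrite (prE_l (n := k)) // big1 // => i _.
by rewrite coefXnM ltn_ord conjc0 mulr0.
Qed.

Lemma pr_coefM n p q : (size p <= n.+1)%N -> (size q <= n.+1)%N ->
  pr p q = (p * dag n q)`_n.
Proof.
move=> sp sq; rewrite coefM (prE_l (n := n.+1)) //; apply: eq_bigr => i _.
have hi : (i <= n)%N by rewrite -ltnS.
by rewrite coef_dag leq_subr subKn.
Qed.

Lemma pr_dag n p q : (size p <= n.+1)%N -> (size q <= n.+1)%N ->
  pr (dag n p) (dag n q) = pr q p.
Proof.
move=> sp sq; rewrite (prE_l (n := n.+1)) ?size_dag // (prE_l (n := n.+1)) //.
rewrite (reindex_inj rev_ord_inj) /=; apply: eq_bigr => i _.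
have hi : (i <= n)%N by rewrite -ltnS.
by rewrite subSS !coef_dag leq_subr subKn // conjcK mulrC.
Qed.

Lemma pr_orth p q : tilde p = p -> tilde q = - q -> pr p q = 0.
Proof.
move=> ep eq; have := pr_tilde p q; rewrite ep eq prNr => h.
have : pr p q *+ 2 = 0 by rewrite mulr2n -{1}h addNr.
by move/eqP; rewrite mulrn_eq0 /= => /eqP.
Qed.

Definition nr p : R := \sum_(i < size p) sqnorm p`_i.

Lemma nrC p : (nr p)%:C = pr p p.
Proof.
rewrite /pr maxnn /nr (rmorph_sum (real_complex R)); apply: eq_bigr => i _.
by rewrite /= sqnormC.
Qed.

Lemma nr_ge0 p : 0 <= nr p.
Proof. by rewrite /nr sumr_ge0 // => i _; exact: sqnorm_ge0. Qed.

Lemma nr_gt0 p : p`_0 != 0 -> 0 < nr p.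
Proof.
move=> p0; have sp : (0 < size p)%N by apply: gt_size.
rewrite /nr (bigD1 (Ordinal sp)) //= ltr_pwDl ?sqnorm_gt0 //.
by rewrite sumr_ge0 // => i _; exact: sqnorm_ge0.
Qed.

End P2.

Section P3.
Local Open Scope ring_scope.
Local Open Scope complex_scope.
Variable R : realType.
Local Notation C := R[i].
Implicit Types p q r : {poly C}.

Lemma prCl (c : C) p q : pr (c%:P * p) q = c * pr p q.
Proof. by rewrite mul_polyC prZl. Qed.
Lemma prCr (c : C) p q : pr p (c%:P * q) = c^c * pr p q.
Proof. by rewrite mul_polyC prZr. Qed.
Lemma tildeC (c : C) : tilde c%:P = c%:P.
Proof. exact: comp_polyC. Qed.
Lemma tildeCM (c : C) p : tilde (c%:P * p) = c%:P * tilde p.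
Proof. by rewrite tildeM tildeC. Qed.
Lemma tildeXnM k p : tilde ('X^k * p) = ((-1) ^+ k)%:P * ('X^k * tilde p).
Proof. by rewrite tildeM tildeXn mul_polyC scalerAl. Qed.

Lemma pr_sq_orth p q : tilde p = p -> tilde q = - q ->
  pr (p + q) (p + q) = pr p p + pr q q.
Proof.
move=> ep eq; rewrite !prDl !prDr (pr_orth ep eq) (pr_conj p q) (pr_orth ep eq).
by rewrite conjc0 !addr0 add0r.
Qed.

Lemma pr_sq_orth' p q : tilde p = p -> tilde q = - q ->
  pr (p + q) (p - q) = pr p p - pr q q.
Proof.
move=> ep eq; rewrite !prDl !prDr !prNr (pr_orth ep eq) (pr_conj p q) (pr_orth ep eq).
by rewrite conjc0 oppr0 !addr0 add0r.
Qed.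

Lemma abab (a b x : C) : a * b * (a * b * x) = (a * a) * (b * b) * x.
Proof. ring. Qed.

Lemma pr_sq_orth'' p q : tilde p = p -> tilde q = - q ->
  pr (q + p) (- q + p) = pr p p - pr q q.
Proof. by move=> ep eq; rewrite (addrC q p) (addrC (- q) p) pr_sq_orth'. Qed.

Lemma sign_conj_sq (e : C) : e * e = 1 -> e^c = e -> e * e^c = 1.
Proof. by move=> h ->. Qed.

Lemma KL n (f : {poly C}) : (size f <= n.+1)%N ->
  (-1) ^+ n * pr (f * dag n f) (tilde (f * dag n f)) = pr (f * tilde f) (f * tilde f).
Proof.
move=> sf.
have sD : (size (dag n f) <= n.+1)%N by apply: size_dag.
have sT : (size (tilde f) <= n.+1)%N by rewrite size_tilde.
have sH : (size (f * dag n f)%R <= (n + n).+1)%N by apply: size_mul_le.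
have sK : (size (f * tilde f)%R <= (n + n).+1)%N by apply: size_mul_le.
rewrite (pr_coefM (n := n + n)) ?size_tilde // (pr_coefM (n := n + n)) //.
rewrite dag_tilde dagM // dagK // dagM // dag_tilde -!mul_polyC.
rewrite exprD sign_sq mul_polyC scale1r tildeM.
have -> : f * tilde f * (dag n f * (((-1) ^+ n)%:P * tilde (dag n f))) =
   ((-1) ^+ n)%:P * (f * dag n f * (tilde (dag n f) * tilde f)) by ring.
by rewrite coefCM.
Qed.

Variables (f : {poly C}) (d : nat) (s : C).
Hypothesis sf : size f = d.+1.
Hypothesis s2 : s * s = 1.
Hypothesis sc : s^c = s.

Local Notation L := d.+1.
Local Notation e := ((-1) ^+ d : C).
Local Notation D := (dag d f).
Local Notation T := (tilde (dag d f)).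
Local Notation H := (f * dag d f).
Local Notation K := (f * tilde f).
Local Notation f' := (f + s%:P * ('X^L * T)).
Local Notation U := (H + e%:P * tilde H).
Local Notation V := (K + e%:P * ('X^(L + L) * (D * T))).

Lemma e2 : e * e = 1. Proof. exact: sign_sq. Qed.
Lemma ec : e^c = e. Proof. exact: conj_sign. Qed.

Lemma sfl : (size f <= d.+1)%N. Proof. by rewrite sf. Qed.
Lemma sDl : (size D <= d.+1)%N. Proof. exact: size_dag. Qed.
Lemma sTl : (size T <= d.+1)%N. Proof. by rewrite size_tilde size_dag. Qed.

Lemma dag_f' : dag (d + L) f' = 'X^L * D + (s * e)%:P * tilde f.
Proof.
rewrite dagD dag_shift ?sfl // mul_polyC dagZ dag_mulXn ?sTl // dag_tilde dagK ?sfl //.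
by rewrite sc scalerA mul_polyC.
Qed.

Lemma H'E : f' * dag (d + L) f' = 'X^L * U + (s * e)%:P * V.
Proof.
rewrite dag_f' tildeM.
have E : forall a b : {poly C}, a = b + (s%:P * s%:P - 1) * (e%:P * ('X^L * (T * tilde f)))
    - (e%:P * e%:P - 1) * (s%:P * ('X^(L + L) * (D * T))) -> a = b.
  move=> a b ->; rewrite -!polyCM s2 e2 subrr !mul0r subr0 addr0 //.
apply: E; rewrite !polyCM exprD.
move: (((-1) ^+ d)%:P : {poly C}) => EE; move: ('X^L : {poly C}) => XL; ring.
Qed.

Lemma tildeU : tilde ('X^L * U) = - ('X^L * U).
Proof.
rewrite tildeXnM tildeD tildeCM tildeK.
have -> : tilde H + e%:P * H = e%:P * U.
  by rewrite mulrDr mulrA -polyCM e2 mul1r addrC.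
have h : ((-1) ^+ L : C) * e = -1 by rewrite exprS mulN1r mulNr sign_sq.
have -> : forall (a b x u : {poly C}), a * (x * (b * u)) = (a * b) * (x * u).
  by move=> *; ring.
by rewrite -polyCM h polyCN mulN1r.
Qed.

Lemma tildeV : tilde V = V.
Proof.
rewrite tildeD tildeM tildeK tildeCM tildeXnM tildeM tildeK.
rewrite exprD sign_sq mul1r.
by congr (_ + _ * (_ * _)); rewrite mulrC.
Qed.

Lemma tildeV' : tilde ((s * e)%:P * V) = (s * e)%:P * V.
Proof. by rewrite tildeCM tildeV. Qed.

Lemma prHH_tilde : pr H (tilde H) = pr (tilde H) H.
Proof. by rewrite -(pr_tilde (tilde H) H) tildeK. Qed.

Lemma prUU : pr U U = 2%:R * pr H H + 2%:R * pr K K.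
Proof.
rewrite !prDl !prDr !prCl !prCr pr_tilde -prHH_tilde ec mulrA e2 mul1r.
rewrite -(KL (n := d)) ?sfl //; ring.
Qed.

Lemma prDTDT : pr (D * T) (D * T) = pr K K.
Proof.
have sK : (size K <= (d + d).+1)%N by apply: size_mul_le; rewrite ?sfl ?size_tilde ?sfl.
have -> : D * T = e%:P * dag (d + d) K.
  rewrite dagM ?sfl ?size_tilde ?sfl // dag_tilde -mul_polyC.
  have h : forall (a : C) (x y : {poly C}), a%:P * (x * (a%:P * y)) = (a * a)%:P * (x * y).
    by move=> a x y; rewrite polyCM; ring.
  by rewrite h e2 mul1r.
by rewrite prCl prCr ec mulrA e2 mul1r pr_dag.
Qed.

Lemma prVV : pr V V = 2%:R * pr K K.
Proof.
have sK : (size K <= L + L)%N.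
  apply: leq_trans (size_mul_le (m := d) (n := d) _ _) _; rewrite ?sfl ?size_tilde ?sfl //; lia.
rewrite !prDl !prDr !prCl !prCr (pr_conj K ('X^(L + L) * (D * T))) (pr_disj _ sK) conjc0 !mulr0.
rewrite pr_mulXn prDTDT ec mulrA e2 mul1r !addr0 add0r.
by rewrite mulr2n mulrDl mul1r.
Qed.

Lemma A'E : pr (f' * dag (d + L) f') (f' * dag (d + L) f') =
  2%:R * pr H H + 4%:R * pr K K.
Proof.
rewrite H'E addrC pr_sq_orth ?tildeV' ?tildeU //.
rewrite pr_mulXn prUU prCl prCr prVV conjcM sc ec abab s2 e2 !mul1r.
move: (pr K K) (pr H H) => x y; ring.
Qed.

Lemma sf' : (size f' <= (d + L).+1)%N.
Proof.
rewrite (leq_trans (size_polyD _ _)) // geq_max sf; apply/andP; split; first lia.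
rewrite mul_polyC (leq_trans (size_scale_leq _ _)) // (leq_trans (size_mulXn_le _ _)) //.
rewrite size_tilde; have := size_dag d f; lia.
Qed.

Lemma B'E : pr (f' * tilde f') (f' * tilde f') = 2%:R * pr H H.
Proof.
rewrite -(KL sf') H'E tildeD tildeV' tildeU.
rewrite pr_sq_orth'' ?tildeV' ?tildeU //.
rewrite pr_mulXn prUU prCl prCr prVV conjcM sc ec abab s2 e2 !mul1r.
rewrite exprD exprS mulN1r mulrN e2.
move: (pr K K) (pr H H) => x y; ring.
Qed.

Lemma N'E : pr f' f' = 2%:R * pr f f.
Proof.
rewrite !prDl !prDr !prCl !prCr (pr_disj _ (leq_trans sfl (leqnn _))).
rewrite (pr_conj f ('X^L * T)) (pr_disj _ (leq_trans sfl (leqnn _))) pr_mulXn.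
rewrite pr_tilde pr_dag ?sfl // mulrA sc s2 mul1r conjc0 !mulr0 addr0 add0r.
by rewrite mulr2n mulrDl mul1r.
Qed.

End P3.

Section P4.
Local Open Scope ring_scope.
Local Open Scope complex_scope.
Variable R : realType.
Local Notation C := R[i].
Implicit Types p q g : {poly C}.

Definition Nf g : R := nr g.
Definition Af g : R := nr (g * dagger g).
Definition Bf g : R := nr (g * tilde g).
Definition cinv g : R := (Af g + Bf g) / (Nf g ^+ 2).

Lemma nr_eq p q : pr p p = pr q q -> nr p = nr q.
Proof. by rewrite -!nrC => /complexI. Qed.

Lemma size_pred g : g`_0 != 0 -> size g = (size g).-1.+1.
Proof. by move=> h; rewrite prednK // (gt_size h). Qed.

Lemma g_neq0 g : g`_0 != 0 -> g != 0.
Proof. by apply: contraNneq => ->; rewrite coef0. Qed.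

Lemma sign_facts (s : C) : s = 1 \/ s = -1 -> s * s = 1 /\ s^c = s.
Proof.
case=> ->; first by rewrite mulr1 conjc1.
by rewrite mulrNN mulr1 conjcN conjc1.
Qed.

Lemma rs_stepE (s : C) g d : size g = d.+1 ->
  rs_step s g = g + s%:P * ('X^(d.+1) * tilde (dag d g)).
Proof.
move=> sg; rewrite /rs_step /len daggerE; last by rewrite -size_poly_eq0 sg.
by rewrite sg /= mul_polyC.
Qed.

Lemma step_facts (s : C) g : s = 1 \/ s = -1 -> g`_0 != 0 ->
  [/\ (rs_step s g)`_0 = g`_0,
      Nf (rs_step s g) = 2%:R * Nf g,
      Af (rs_step s g) = 2%:R * Af g + 4%:R * Bf g &
      Bf (rs_step s g) = 2%:R * Af g].
Proof.
move=> /sign_facts [s2 sc] g0.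
set d := (size g).-1; have sg : size g = d.+1 by apply: size_pred.
rewrite (rs_stepE s sg).
have hd : dagger g = dag d g by rewrite daggerE ?g_neq0.
split.
- by rewrite coefD coefCM coefXnM /= mulr0 addr0.
- apply: complexI; rewrite nrC N'E // rmorphM /= rmorph_nat nrC //.
- have sz : size (g + s%:P * ('X^(d.+1) * tilde (dag d g))) = (d + d.+1).+1.
    apply/anti_leq; rewrite sf' //=.
    apply: gt_size; rewrite coefD coefCM coefXnM ltnNge leq_addl /= addnK.
    rewrite coef_tilde coef_dag leqnn subnn (coef_ge (p := g) (i := (d + d.+1)%N)); last first.
      by rewrite sg leq_addl.
    rewrite add0r !mulf_neq0 ?signr_eq0 //; last by rewrite conjc_eq0.
    by apply: contra_eq_neq s2 => ->; rewrite mul0r eq_sym oner_neq0.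
  apply: complexI; rewrite /Af daggerE; last by rewrite -size_poly_eq0 sz.
  rewrite sz /= nrC A'E // rmorphD !rmorphM /= !rmorph_nat /Af /Bf hd !nrC //.
- apply: complexI; rewrite /Bf nrC B'E // rmorphM /= rmorph_nat /Af hd nrC //.
Qed.

End P4.

Section P5.
Local Open Scope ring_scope.
Local Open Scope complex_scope.
Variable R : realType.
Local Notation C := R[i].
Implicit Types p q g : {poly C}.

Lemma inv_n g : g`_0 != 0 -> (- g)`_0 != 0 /\ cinv (- g) = cinv g.
Proof.
move=> g0; split; first by rewrite coefN oppr_eq0.
set d := (size g).-1; have sg : size g = d.+1 by apply: size_pred.
have sg' : size (- g) = d.+1 by rewrite size_opp.
have gn : g != 0 by apply: g_neq0.
have gn' : - g != 0 by rewrite oppr_eq0.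
rewrite /cinv /Af /Bf /Nf !daggerE // sg sg' /= dagN mulrNN tildeN mulrNN.
by congr ((_ + _) / _ ^+ 2); apply: nr_eq; rewrite prNl prNr opprK.
Qed.

Lemma inv_h g : g`_0 != 0 -> (tilde g)`_0 != 0 /\ cinv (tilde g) = cinv g.
Proof.
move=> g0; split; first by rewrite coef_tilde expr0 mul1r.
set d := (size g).-1; have sg : size g = d.+1 by apply: size_pred.
have sg' : size (tilde g) = d.+1 by rewrite size_tilde.
have gn : g != 0 by apply: g_neq0.
have gn' : tilde g != 0 by rewrite -size_poly_eq0 sg'.
rewrite /cinv /Af /Bf /Nf !daggerE // sg sg' /= tildeK [tilde g * g]mulrC.
congr ((_ + _) / _ ^+ 2); apply: nr_eq; last by rewrite pr_tilde.
rewrite dag_tilde -mul_polyC.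
have -> : tilde g * (((-1) ^+ d)%:P * tilde (dag d g)) =
   ((-1) ^+ d)%:P * tilde (g * dag d g) by rewrite tildeM mulrCA.
by rewrite prCl prCr conj_sign mulrA sign_sq mul1r pr_tilde.
Qed.

Lemma inv_r g : g`_0 != 0 -> (dagger g)`_0 != 0 /\ cinv (dagger g) = cinv g.
Proof.
move=> g0.
set d := (size g).-1; have sg : size g = d.+1 by apply: size_pred.
have gn : g != 0 by apply: g_neq0.
have sgl : (size g <= d.+1)%N by rewrite sg.
have hd : dagger g = dag d g by rewrite daggerE.
have D0 : (dag d g)`_0 != 0.
  rewrite coef_dag leq0n subn0 conjc_eq0.
  have := gn; rewrite -lead_coef_eq0 lead_coefE sg //.
have sD : size (dag d g) = d.+1.
  apply/anti_leq; rewrite size_dag /=; apply: gt_size.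
  by rewrite coef_dag leqnn subnn conjc_eq0.
have Dn : dag d g != 0 by apply: g_neq0.
rewrite hd; split => //.
rewrite /cinv /Af /Bf /Nf !daggerE // sg sD /= dagK //.
congr ((_ + _) / _ ^+ 2); apply: nr_eq.
- by rewrite mulrC.
- exact: prDTDT.
- by rewrite pr_dag.
Qed.

Lemma inv_G (t : {poly C} -> {poly C}) : in_G t ->
  forall g, g`_0 != 0 -> (t g)`_0 != 0 /\ cinv (t g) = cinv g.
Proof.
elim=> [|t' _ IH|t' _ IH|t' _ IH] g g0 //=;
  have [h1 h2] := IH g g0; rewrite -h2.
- exact: inv_n.
- exact: inv_h.
- exact: inv_r.
Qed.

End P5.

Section P6.
Local Open Scope ring_scope.
Local Open Scope complex_scope.
Variable R : realType.
Local Notation C := R[i].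
Implicit Types p q g : {poly C}.

Lemma coefz_neg g (z : int) : (z < 0)%R -> coefz g z = 0.
Proof. by case: z. Qed.

Lemma acorr_coef g d k : size g = d.+1 ->
  acorr g (k%:Z - d%:Z) = (g * dag d g)`_k.
Proof.
move=> sg; rewrite mulrC coefM /acorr sg.
pose G (j : nat) := (dag d g)`_j * (if (j <= k)%N then g`_(k - j) else 0).
transitivity (\sum_(j < d.+1) G j); last first.
  rewrite -(@sum_widen2 _ d.+1 k.+1 G).
  - by apply: eq_bigr => j _; rewrite /G -ltnS ltn_ord.
  - by move=> j hj; rewrite /G coef_dag leqNgt hj mul0r.
  - by move=> j hj; rewrite /G leqNgt hj mulr0.
rewrite (reindex_inj rev_ord_inj) /=; apply: eq_bigr => j _.
have hj : (j <= d)%N by rewrite -ltnS.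
rewrite subSS /G coef_dag hj [RHS]mulrC; congr (_ * _).
rewrite -subzn //.
have -> : ((d%:Z - j%:Z) + (k%:Z - d%:Z) = k%:Z - j%:Z)%R by ring.
case: (leqP j k) => hjk; first by rewrite subzn.
by rewrite coefz_neg // subr_lt0 ltz_nat.
Qed.

Lemma sqnorm_real (x : R) : sqnorm (x%:C)%C = x ^+ 2.
Proof. by rewrite sqnormE /= expr0n /= addr0. Qed.

Lemma ADFE g : g`_0 != 0 -> ADF g = Af g / (Nf g ^+ 2) - 1.
Proof.
move=> g0; set d := (size g).-1; have sg : size g = d.+1 by apply: size_pred.
have gn : g != 0 by apply: g_neq0.
have hN : Nf g != 0 by rewrite /Nf lt0r_neq0 // nr_gt0.
have sH : (size (g * dag d g)%R <= d.*2.+1)%N.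
  by rewrite -addnn; apply: size_mul_le; rewrite ?sg ?size_dag.
have hd : (d < d.*2.+1)%N by lia.
have H0 : acorr g 0 = (Nf g)%:C%C.
  have := acorr_coef d sg; rewrite subrr => ->.
  by rewrite /Nf nrC (pr_coefM (n := d)) // ?sg.
have -> : Af g = sqnorm ((g * dag d g)`_d) +
    \sum_(k < d.*2.+1 | k != Ordinal hd) sqnorm ((g * dag d g)`_k).
  rewrite /Af daggerE // sg /= /nr.
  rewrite -(@sum_widen _ (size (g * dag d g)%R) d.*2.+1 (fun k => sqnorm ((g * dag d g)`_k))) //.
    by rewrite (bigD1 (Ordinal hd)).
  by move=> i hi; rewrite coef_ge // sqnormE /= expr0n /= addr0.
rewrite /ADF sg /= H0 sqnorm_real.
have -> : \sum_(k < d.*2.+1 | (k%:Z - d%:Z)%R != 0) sqnorm (acorr g (k%:Z - d%:Z)%R) =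
   \sum_(k < d.*2.+1 | k != Ordinal hd) sqnorm ((g * dag d g)`_k).
  apply: eq_big => k; first by rewrite subr_eq0 eqz_nat.
  by move=> _; rewrite acorr_coef.
have := acorr_coef d sg; rewrite subrr H0 => <-.
rewrite sqnorm_real; field; exact: hN.
Qed.

End P6.

Unset Implicit Arguments.
Local Open Scope ring_scope.
Local Open Scope classical_set_scope.

Lemma seq_limit (R : realType) (f : nat -> {poly R[i]}) :
  RS_like f -> (f 0%N)`_0 != 0 ->
  ADF (f m) @[m --> \oo] --> (2%:R / 3%:R * cinv (f 0%N) - 1).
Proof.
case=> sig [hs hf] f0.
have nz : forall m, (f m)`_0 != 0.
  elim => // m IH; rewrite hf; have [-> _ _ _] := step_facts (hs m) IH; exact: IH.
have hN : forall m, Nf (f m) != 0 by move=> m; rewrite /Nf lt0r_neq0 // nr_gt0.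
pose al m := Af (f m) / Nf (f m) ^+ 2.
pose be m := Bf (f m) / Nf (f m) ^+ 2.
have rec : forall m, al m.+1 = al m / 2%:R + be m /\ be m.+1 = al m / 2%:R.
  move=> m; rewrite /al /be hf; have [_ -> -> ->] := step_facts (hs m) (nz m).
  by split; field; rewrite hN.
pose c := al 0%N + be 0%N.
pose e0 := al 0%N - 2%:R * be 0%N.
pose z : R := - 2%:R^-1.
have closed : forall m, al m + be m = c /\ al m - 2%:R * be m = z ^+ m * e0.
  elim => [|m [IH1 IH2]]; first by rewrite expr0 mul1r.
  have [r1 r2] := rec m; rewrite r1 r2; split.
    by rewrite -IH1; field.
  by rewrite exprS -mulrA -IH2 /z; field.
have E : forall m, ADF (f m) = (2%:R / 3%:R * c - 1) + (e0 / 3%:R) * z ^+ m.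
  move=> m; rewrite ADFE // -/(al m); have [h1 h2] := closed m.
  have -> : al m = (2%:R * (al m + be m) + (al m - 2%:R * be m)) / 3%:R by field.
  by rewrite h1 h2; field.
have -> : cinv (f 0%N) = c by rewrite /c /al /be /cinv mulrDl.
have -> : (fun m => ADF (f m)) = (fun m => (2%:R / 3%:R * c - 1) + (e0 / 3%:R) * z ^+ m).
  by apply: funext => m; rewrite E.
have hz : `|z| < 1 by rewrite /z normrN ger0_norm ?invr_ge0 ?ler0n //; lra.
have hz' := cvg_expr hz.
have h := cvgD (cvg_cst (2%:R / 3%:R * c - 1)) (cvgM (cvg_cst (e0 / 3%:R)) hz').
rewrite mulr0 addr0 in h; exact: h.
Qed.

Theorem corollary3p3 (R : realType) (ell : nat)
    (t : {poly R[i]} -> {poly R[i]}) (f a : nat -> {poly R[i]}) :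
  in_P ell (f 0%N) ->
  in_G t ->
  a 0%N = t (f 0%N) ->
  RS_like f -> RS_like a ->
  exists L : R,
    ADF (a m) @[m --> \oo] --> L /\ ADF (f m) @[m --> \oo] --> L.
Proof.
case=> _ f0 hG ha rf ra.
have [a0 ca] := inv_G hG f0; rewrite -ha in a0 ca.
exists (2%:R / 3%:R * cinv (f 0%N) - 1); split; last exact: seq_limit.
by rewrite -ca; exact: seq_limit.
Qed.
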